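(* Let $K$ be a field of characteristic $p>0$ such that $K/k$ is a finitely generated field extension, where $k=\bigcap_{n\ge0}K^{p^n}$. Let $n$ be a positive integer. The map $W_\bullet\mapsto W_n$ is a bijection from the set of power towers on $K$ of length $n$ to the set of subfields of $K$ of exponent $n$.
   Context: A power tower on $K$ is a sequence of subfields $W_0,W_1,\ldots$ of $K$ with $W_j=W_i\cdot K^{p^j}$ whenever $j\le i$ ($\cdot$ = compositum in $K$). It has length $n$ if $n$ is the least integer with $W_N=W_n$ for all $N\ge n$. A subfield $W\subseteq K$ has exponent $n$ if $n$ is the least integer with $K^{p^n}\subseteq W$. *)

(* Defs.v *)
(* Subfields of an arbitrary (possibly infinite-dimensional)
   field K are represented as predicates K -> Prop closed under the field
   operations; equality of subfields is Leibniz equality of predicates. *)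
From mathcomp Require Import all_boot all_order all_algebra.
Set Implicit Arguments. Unset Strict Implicit. Unset Printing Implicit Defensive.
Import GRing.Theory.
Local Open Scope ring_scope.

Section PowerTowers.
Variable K : fieldType.

Definition is_subfield (W : K -> Prop) : Prop :=
  [/\ W 0, W 1,
      (forall x y, W x -> W y -> W (x - y)),
      (forall x y, W x -> W y -> W (x * y)) &
      (forall x, W x -> W x^-1)].

Definition frob_pow (p n : nat) : K -> Prop :=
  fun x => exists y : K, x = y ^+ (p ^ n).

Definition gen_subfield (A : K -> Prop) : K -> Prop :=
  fun x => forall W, is_subfield W -> (forall a, A a -> W a) -> W x.

Definition compositum (A B : K -> Prop) : K -> Prop :=
  gen_subfield (fun x => A x \/ B x).

Definition perfect_core (p : nat) : K -> Prop :=
  fun x => forall n, frob_pow p n x.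

Definition fin_gen_over (k : K -> Prop) : Prop :=
  exists s : seq K, forall x : K, gen_subfield (fun y => k y \/ y \in s) x.

Definition power_tower (p : nat) (W : nat -> K -> Prop) : Prop :=
  (forall i, is_subfield (W i)) /\
  (forall i j, (j <= i)%N -> W j = compositum (W i) (frob_pow p j)).

Definition stable_from (W : nat -> K -> Prop) (m : nat) : Prop :=
  forall N, (m <= N)%N -> W N = W m.

Definition tower_length (W : nat -> K -> Prop) (n : nat) : Prop :=
  stable_from W n /\ (forall m, stable_from W m -> (n <= m)%N).

Definition contains_frob (p : nat) (V : K -> Prop) (m : nat) : Prop :=
  forall x, frob_pow p m x -> V x.

Definition subfield_exponent (p : nat) (V : K -> Prop) (n : nat) : Prop :=
  contains_frob p V n /\ (forall m, contains_frob p V m -> (n <= m)%N).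

End PowerTowers.

(* Main.v *)
Require Import Defs.
From mathcomp Require Import all_boot all_order all_algebra.
From Stdlib Require Import FunctionalExtensionality PropExtensionality.
Import GRing.Theory.
Local Open Scope ring_scope.

Section Aux.
Variable K : fieldType.

Lemma pred_ext (A B : K -> Prop) : (forall x, A x <-> B x) -> A = B.
Proof.
move=> h; apply: functional_extensionality => x.
by apply: propositional_extensionality.
Qed.

Lemma gen_is_sub (A : K -> Prop) : is_subfield (gen_subfield A).
Proof.
split.
- by move=> W [] *.
- by move=> W [] *.
- move=> x y hx hy W hW hA; case: (hW) => _ _ hs _ _; apply: hs; [exact: hx|exact: hy].
- move=> x y hx hy W hW hA; case: (hW) => _ _ _ hm _; apply: hm; [exact: hx|exact: hy].
- move=> x hx W hW hA; case: (hW) => _ _ _ _ hi; apply: hi; exact: hx.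
Qed.

Lemma gen_sup (A : K -> Prop) x : A x -> gen_subfield A x.
Proof. by move=> ha W _ hA; apply: hA. Qed.

Lemma gen_min (A W : K -> Prop) : is_subfield W -> (forall a, A a -> W a) ->
  forall x, gen_subfield A x -> W x.
Proof. by move=> hW hA x hx; apply: hx. Qed.

Lemma comp_le (A B C : K -> Prop) :
  (forall a, A a -> compositum B C a) -> forall x, gen_subfield A x -> compositum B C x.
Proof. move=> h; apply: gen_min => //; exact: gen_is_sub. Qed.

Lemma compL (A B : K -> Prop) x : A x -> compositum A B x.
Proof. by move=> h; apply: gen_sup; left. Qed.
Lemma compR (A B : K -> Prop) x : B x -> compositum A B x.
Proof. by move=> h; apply: gen_sup; right. Qed.

Lemma comp_id (V F : K -> Prop) : is_subfield V -> (forall x, F x -> V x) ->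
  compositum V F = V.
Proof.
move=> hV hF; apply: pred_ext => x; split; last exact: compL.
apply: gen_min => // a [] //; exact: hF.
Qed.

Lemma frob_mono (p i j : nat) x : (j <= i)%N -> @frob_pow K p i x -> @frob_pow K p j x.
Proof.
move=> hji [y ->]; exists (y ^+ (p ^ (i - j))).
by rewrite -exprM -expnD subnK.
Qed.

End Aux.

Theorem mainTheorem9 (K : fieldType) (p : nat) (hp : p \in [pchar K])
  (hfg : fin_gen_over ((@perfect_core K p))) (n : nat) (hn : (0 < n)%N) :
  (forall W : nat -> K -> Prop, power_tower p W -> tower_length W n ->
     is_subfield (W n) /\ subfield_exponent p (W n) n) /\
  (forall V : K -> Prop, is_subfield V -> subfield_exponent p V n ->
     exists W : nat -> K -> Prop,
       [/\ power_tower p W, tower_length W n, W n = V &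
           forall W' : nat -> K -> Prop, power_tower p W' -> tower_length W' n ->
             W' n = V -> W' = W]).
Proof.
split.
- move=> W [hsub htow] [hst hmin]; split; first exact: hsub.
  split.
  + move=> x hx; rewrite (htow n n (leqnn n)); exact: compR.
  + move=> m hm; case: (leqP n m) => // hmn.
    have key : forall j, (m <= j)%N -> W j = W n.
      move=> j hj; case: (leqP n j) => hnj; first exact: hst.
      rewrite (htow n j (ltnW hnj)); apply: comp_id => // x hx.
      by apply: hm; apply: frob_mono hx.
    suff: (n <= m)%N by rewrite leqNgt hmn.
    apply: hmin => N hN; rewrite key // key //.
- move=> V hV [hc hmin].
  pose W := fun j => compositum V (frob_pow p (minn j n)).
  have hWn : W n = V by rewrite /W minnn; apply: comp_id.
  exists W; split => //.
  + split; first by move=> i; exact: gen_is_sub.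
    move=> i j hji; apply: pred_ext => x; split.
    * apply: comp_le => a [ha|ha]; first by apply: compL; apply: compL.
      case: (leqP j n) => hjn.
      - by apply: compR; move: ha; rewrite (minn_idPl hjn).
      - move: ha; rewrite (minn_idPr (ltnW hjn)) => ha.
        by apply: compL; apply: compL; apply: hc.
    * apply: comp_le => a [ha|ha].
      - apply: comp_le ha => b [hb|hb]; first exact: compL.
        apply: compR; apply: frob_mono hb.
        by rewrite leq_min geq_minr (leq_trans (geq_minl _ _) hji).
      - apply: compR; apply: frob_mono ha; exact: geq_minl.
  + split.
    * by move=> N hN; rewrite /W (minn_idPr hN) minnn.
    * move=> m hm; case: (leqP n m) => // hmn.
      have e : W m = W n by rewrite hm // ltnW.
      have : contains_frob p V m.
        move=> x hx; rewrite -hWn -e; apply: compR.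
        by rewrite (minn_idPl (ltnW hmn)).
      by move/hmin; rewrite leqNgt hmn.
  + move=> W' [hs' ht'] [hst' _] hW'n.
    apply: functional_extensionality => i.
    case: (leqP i n) => hin.
    * by rewrite (ht' n i hin) hW'n /W (minn_idPl hin).
    * by rewrite hst' ?(ltnW hin) // hW'n -{1}hWn /W (minn_idPr (ltnW hin)) minnn.
Qed.
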